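(* The set $P=\bigsqcup_{n\ge1}P_n$, equipped with the operations $\dashv,\vdash,\perp$ described in the context, is an associative trioid, and it is the free associative trioid on the one generator $\{0\}\in P_1$. Precisely, let $\mathcal T$ be the free associative trioid on one generator $x$. Then the unique trioid morphism $\phi:\mathcal T\to P$ with $\phi(x)=\{0\}$ is a bijection, and it maps the elements of $\mathcal T$ that are products of $n$ copies of $x$ onto $P_n$.
   Context: An associative trioid is a set $X$ equipped with three binary operations $\dashv,\vdash,\perp:X\times X\to X$ satisfying for all $x,y,z\in X$ the following 11 relations: (1) $(x\dashv y)\dashv z=x\dashv(y\dashv z)$; (2) $(x\dashv y)\dashv z=x\dashv(y\vdash z)$; (3) $(x\vdash y)\dashv z=x\vdash(y\dashv z)$; (4) $(x\dashv y)\vdash z=x\vdash(y\vdash z)$; (5) $(x\vdash y)\vdash z=x\vdash(y\vdash z)$; (6) $(x\dashv y)\dashv z=x\dashv(y\perp z)$; (7) $(x\perp y)\dashv z=x\perp(y\dashv z)$; (8) $(x\dashv y)\perp z=x\perp(y\vdash z)$; (9) $(x\vdash y)\perp z=x\vdash(y\perp z)$; (10) $(x\perp y)\vdash z=x\vdash(y\vdash z)$; (11) $(x\perp y)\perp z=x\perp(y\perp z)$. A morphism of trioids is a map preserving all three operations. For $n\ge1$ let $[n-1]=\{0,\dots,n-1\}$ and let $P_n$ be the set of nonempty subsets of $[n-1]$. For $p,q\ge1$ let $\mathrm{bij}:[p-1]\sqcup[q-1]\to[p+q-1]$ be the identity on the first copy and $k\mapsto p+k$ on the second copy. For $X\in P_p$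 and $Y\in P_q$ set, in $P_{p+q}$: - $X\dashv Y=\mathrm{bij}(X)$ (with $X$ in the first copy); - $X\vdash Y=\mathrm{bij}(Y)$ (with $Y$ in the second copy); - $X\perp Y=\mathrm{bij}(X\sqcup Y)$. *)

(* Defs.v *)
From mathcomp Require Import all_boot.
Set Implicit Arguments. Unset Strict Implicit. Unset Printing Implicit Defensive.

(** Abstract trioid axioms (1)-(11) for three binary operations
    l = "dashv", r = "vdash", p = "perp". *)
Definition is_trioid (X : Type) (l r p : X -> X -> X) : Prop :=
  (forall x y z, l (l x y) z = l x (l y z)) /\
  (forall x y z, l (l x y) z = l x (r y z)) /\
  (forall x y z, l (r x y) z = r x (l y z)) /\
  (forall x y z, r (l x y) z = r x (r y z)) /\
  (forall x y z, r (r x y) z = r x (r y z)) /\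
  (forall x y z, l (l x y) z = l x (p y z)) /\
  (forall x y z, l (p x y) z = p x (l y z)) /\
  (forall x y z, p (l x y) z = p x (r y z)) /\
  (forall x y z, p (r x y) z = r x (p y z)) /\
  (forall x y z, r (p x y) z = r x (r y z)) /\
  (forall x y z, p (p x y) z = p x (p y z)).

(** The set P = disjoint union over n of the nonempty subsets of [n-1] = 'I_n. *)
Definition Praw := {n : nat & {set 'I_n}}.
Definition Pvalid (x : Praw) : bool := projT2 x != set0.
Definition P := {x : Praw | Pvalid x}.
Definition deg (x : P) : nat := projT1 (proj1_sig x).

(* bij on the first copy is lshift, on the second copy is rshift *)
Definition rawL (x y : Praw) : Praw :=
  existT _ (projT1 x + projT1 y) (lshift (projT1 y) @: projT2 x).
Definition rawR (x y : Praw) : Praw :=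
  existT _ (projT1 x + projT1 y) (@rshift (projT1 x) (projT1 y) @: projT2 y).
Definition rawP (x y : Praw) : Praw :=
  existT _ (projT1 x + projT1 y)
    ((lshift (projT1 y) @: projT2 x) :|: (@rshift (projT1 x) (projT1 y) @: projT2 y)).

Lemma rawL_valid x y : Pvalid x -> Pvalid (rawL x y).
Proof. by case: x => n X; case: y => m Y; rewrite /Pvalid /= imset_eq0. Qed.
Lemma rawR_valid x y : Pvalid y -> Pvalid (rawR x y).
Proof. by case: x => n X; case: y => m Y; rewrite /Pvalid /= imset_eq0. Qed.
Lemma rawP_valid x y : Pvalid x -> Pvalid (rawP x y).
Proof.
case: x => n X; case: y => m Y; rewrite /Pvalid /= => hx.
by rewrite setU_eq0 negb_and imset_eq0 hx.
Qed.

Definition pL (x y : P) : P :=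
  exist _ (rawL (proj1_sig x) (proj1_sig y)) (rawL_valid (proj1_sig y) (proj2_sig x)).
Definition pR (x y : P) : P :=
  exist _ (rawR (proj1_sig x) (proj1_sig y)) (rawR_valid (proj1_sig x) (proj2_sig y)).
Definition pP (x y : P) : P :=
  exist _ (rawP (proj1_sig x) (proj1_sig y)) (rawP_valid (proj1_sig y) (proj2_sig x)).

Lemma gen_valid : Pvalid (existT _ 1 [set ord0 : 'I_1]).
Proof. by apply/set0Pn; exists ord0; rewrite in_set1. Qed.
Definition genP : P := exist (fun x : Praw => Pvalid x) _ gen_valid.

(** The free associative trioid on one generator x: terms modulo the
    congruence generated by (1)-(11). *)
Inductive term : Type :=
| tX : term
| tL : term -> term -> term
| tR : term -> term -> term
| tP : term -> term -> term.

Inductive teq : term -> term -> Prop :=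
| teq_refl t : teq t t
| teq_sym s t : teq s t -> teq t s
| teq_trans s t u : teq s t -> teq t u -> teq s u
| teq_L s s' t t' : teq s s' -> teq t t' -> teq (tL s t) (tL s' t')
| teq_R s s' t t' : teq s s' -> teq t t' -> teq (tR s t) (tR s' t')
| teq_P s s' t t' : teq s s' -> teq t t' -> teq (tP s t) (tP s' t')
| ax1 x y z : teq (tL (tL x y) z) (tL x (tL y z))
| ax2 x y z : teq (tL (tL x y) z) (tL x (tR y z))
| ax3 x y z : teq (tL (tR x y) z) (tR x (tL y z))
| ax4 x y z : teq (tR (tL x y) z) (tR x (tR y z))
| ax5 x y z : teq (tR (tR x y) z) (tR x (tR y z))
| ax6 x y z : teq (tL (tL x y) z) (tL x (tP y z))
| ax7 x y z : teq (tL (tP x y) z) (tP x (tL y z))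
| ax8 x y z : teq (tP (tL x y) z) (tP x (tR y z))
| ax9 x y z : teq (tP (tR x y) z) (tR x (tP y z))
| ax10 x y z : teq (tR (tP x y) z) (tR x (tR y z))
| ax11 x y z : teq (tP (tP x y) z) (tP x (tP y z)).

Fixpoint leaves (t : term) : nat :=
  match t with
  | tX => 1
  | tL a b | tR a b | tP a b => leaves a + leaves b
  end.

Fixpoint phi (t : term) : P :=
  match t with
  | tX => genP
  | tL a b => pL (phi a) (phi b)
  | tR a b => pR (phi a) (phi b)
  | tP a b => pP (phi a) (phi b)
  end.

(* Main.v *)
Require Import Defs.
From mathcomp Require Import all_boot.
Set Implicit Arguments. Unset Strict Implicit. Unset Printing Implicit Defensive.

Definition ex n (X : {set 'I_n}) (i : nat) : bool :=
  [exists j : 'I_n, (j \in X) && (val j == i)].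

Lemma ex_ge n (X : {set 'I_n}) i : n <= i -> ex X i = false.
Proof.
move=> h; apply/existsP => [[j /andP[_ /eqP hj]]].
by have := ltn_ord j; rewrite hj ltnNge h.
Qed.

Lemma ex_lshift n m (X : {set 'I_n}) i : ex (lshift m @: X) i = ex X i.
Proof.
apply/existsP/existsP.
- case=> j /andP[/imsetP[k kX ->] /eqP hj]; exists k; by rewrite kX -hj /=.
- case=> k /andP[kX /eqP hk]; exists (lshift m k); by rewrite imset_f //= hk eqxx.
Qed.

Lemma ex_rshift n m (Y : {set 'I_m}) i :
  ex (@rshift n m @: Y) i = (n <= i) && ex Y (i - n).
Proof.
apply/existsP/andP.
- case=> j /andP[/imsetP[k kY ->] /eqP hj]; rewrite -hj /= leq_addr; split => //.
  by apply/existsP; exists k; rewrite kY addKn eqxx.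
- case=> hn /existsP[k /andP[kY /eqP hk]]; exists (rshift n k).
  by rewrite imset_f //= hk subnKC // eqxx.
Qed.

Lemma ex_setU n (A B : {set 'I_n}) i : ex (A :|: B) i = ex A i || ex B i.
Proof.
apply/existsP/orP.
- by case=> j /andP[]; rewrite in_setU => /orP[] h1 h2; [left|right];
     apply/existsP; exists j; rewrite h1 h2.
- by case=> /existsP[j /andP[h1 h2]]; exists j; rewrite in_setU h1 h2 ?orbT.
Qed.

Definition encr (x : Praw) : seq bool :=
  mkseq (fun i => ex (projT2 x) i) (projT1 x).

Lemma size_encr x : size (encr x) = projT1 x.
Proof. by rewrite size_mkseq. Qed.

Lemma encrL x y : encr (rawL x y) = encr x ++ nseq (projT1 y) false.
Proof.
case: x => n X; case: y => m Y; rewrite /encr /=.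
apply: (@eq_from_nth _ false); first by rewrite size_cat !size_mkseq size_nseq.
move=> i; rewrite size_mkseq => hi; rewrite nth_mkseq // nth_cat size_mkseq ex_lshift.
case: ifP => hin; first by rewrite nth_mkseq.
by rewrite nth_nseq if_same ex_ge // leqNgt hin.
Qed.

Lemma encrR x y : encr (rawR x y) = nseq (projT1 x) false ++ encr y.
Proof.
case: x => n X; case: y => m Y; rewrite /encr /=.
apply: (@eq_from_nth _ false); first by rewrite size_cat !size_mkseq size_nseq.
move=> i; rewrite size_mkseq => hi; rewrite nth_mkseq // nth_cat size_nseq ex_rshift.
case: ifP => hin; first by rewrite nth_nseq hin leqNgt hin.
have hni : n <= i by rewrite leqNgt hin.
by rewrite nth_mkseq ?ltn_subLR // hni.
Qed.

Lemma encrP x y : encr (rawP x y) = encr x ++ encr y.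
Proof.
case: x => n X; case: y => m Y; rewrite /encr /=.
apply: (@eq_from_nth _ false); first by rewrite size_cat !size_mkseq.
move=> i; rewrite size_mkseq => hi; rewrite nth_mkseq // nth_cat size_mkseq ex_setU
  ex_lshift ex_rshift.
case: ifP => hin; first by rewrite nth_mkseq // leqNgt hin orbF.
have hni : n <= i by rewrite leqNgt hin.
by rewrite nth_mkseq ?ltn_subLR // hni ex_ge.
Qed.

Lemma encr_inj x y : encr x = encr y -> x = y.
Proof.
case: x => n X; case: y => m Y => E.
have := congr1 size E; rewrite !size_encr /= => enm; subst m.
suff -> : X = Y by [].
apply/setP => j.
have := congr1 (fun s => nth false s j) E; rewrite /encr /= !nth_mkseq //.
have key (Z : {set 'I_n}) : ex Z j = (j \in Z).
  apply/existsP/idP; last by move=> h; exists j; rewrite h eqxx.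
  by case=> k /andP[kZ /eqP/val_inj hk]; rewrite -hk.
by rewrite !key.
Qed.

Definition E (x : P) := encr (proj1_sig x).

Lemma E_inj x y : E x = E y -> x = y.
Proof.
case: x => x hx; case: y => y hy; rewrite /E /= => /encr_inj ?; subst y.
by rewrite (bool_irrelevance hx hy).
Qed.

Lemma E_L x y : E (pL x y) = E x ++ nseq (size (E y)) false.
Proof. by rewrite /E /= encrL size_encr. Qed.
Lemma E_R x y : E (pR x y) = nseq (size (E x)) false ++ E y.
Proof. by rewrite /E /= encrR size_encr. Qed.
Lemma E_P x y : E (pP x y) = E x ++ E y.
Proof. by rewrite /E /= encrP. Qed.

Lemma trioid : is_trioid pL pR pP.
Proof.
rewrite /is_trioid.
repeat split.
all: move=> x y z; apply: E_inj; by rewrite ?(E_L, E_R, E_P, size_cat, size_nseq, nseqD, catA).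
Qed.

Fixpoint lc k := match k with 0 => tX | k'.+1 => tL tX (lc k') end.
Fixpoint rc k := match k with 0 => tX | k'.+1 => tR tX (rc k') end.

Lemma leaves_pos t : 0 < leaves t.
Proof. by elim: t => //= a IHa b IHb; rewrite addn_gt0 IHa. Qed.

Lemma leaves_lc k : leaves (lc k) = k.+1.
Proof. by elim: k => //= k ->. Qed.

Lemma lc_cat j k : teq (tL (lc j) (lc k)) (lc (j + k).+1).
Proof.
elim: j => [|j IH] /=; first exact: teq_refl.
apply: teq_trans (ax1 _ _ _) _.
by apply: teq_L => //; apply: teq_refl.
Qed.

Lemma rc_cat j k : teq (tR (rc j) (rc k)) (rc (j + k).+1).
Proof.
elim: j => [|j IH] /=; first exact: teq_refl.
apply: teq_trans (ax5 _ _ _) _.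
by apply: teq_R => //; apply: teq_refl.
Qed.

Lemma pred_add a b : 0 < a -> 0 < b -> (a + b).-1 = (a.-1 + b.-1).+1.
Proof. by case: a => // a; case: b => // b; rewrite addSn addnS. Qed.

Lemma L_norm u : forall a, teq (tL a u) (tL a (lc (leaves u).-1)).
Proof.
have step u1 u2 : (forall a, teq (tL a u1) (tL a (lc (leaves u1).-1))) ->
   (forall a, teq (tL a u2) (tL a (lc (leaves u2).-1))) ->
   forall a, teq (tL (tL a u1) u2) (tL a (lc (leaves u1 + leaves u2).-1)).
  move=> IH1 IH2 a.
  apply: teq_trans (teq_L (IH1 a) (teq_refl u2)) _.
  apply: teq_trans (IH2 _) _.
  apply: teq_trans (ax1 _ _ _) _.
  rewrite pred_add ?leaves_pos //.
  exact: teq_L (teq_refl _) (lc_cat _ _).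
elim: u => [|u1 IH1 u2 IH2|u1 IH1 u2 IH2|u1 IH1 u2 IH2] a /=.
- exact: teq_refl.
- exact: teq_trans (teq_sym (ax1 _ _ _)) (step _ _ IH1 IH2 a).
- exact: teq_trans (teq_sym (ax2 _ _ _)) (step _ _ IH1 IH2 a).
- exact: teq_trans (teq_sym (ax6 _ _ _)) (step _ _ IH1 IH2 a).
Qed.

Lemma R_norm u : forall a, teq (tR u a) (tR (rc (leaves u).-1) a).
Proof.
have step u1 u2 : (forall a, teq (tR u1 a) (tR (rc (leaves u1).-1) a)) ->
   (forall a, teq (tR u2 a) (tR (rc (leaves u2).-1) a)) ->
   forall a, teq (tR u1 (tR u2 a)) (tR (rc (leaves u1 + leaves u2).-1) a).
  move=> IH1 IH2 a.
  apply: teq_trans (teq_R (teq_refl u1) (IH2 a)) _.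
  apply: teq_trans (IH1 _) _.
  apply: teq_trans (teq_sym (ax5 _ _ _)) _.
  rewrite pred_add ?leaves_pos //.
  exact: teq_R (rc_cat _ _) (teq_refl _).
elim: u => [|u1 IH1 u2 IH2|u1 IH1 u2 IH2|u1 IH1 u2 IH2] a /=.
- exact: teq_refl.
- exact: teq_trans (ax4 _ _ _) (step _ _ IH1 IH2 a).
- exact: teq_trans (ax5 _ _ _) (step _ _ IH1 IH2 a).
- exact: teq_trans (ax10 _ _ _) (step _ _ IH1 IH2 a).
Qed.

Fixpoint nf (s : seq bool) : term :=
  match s with
  | [::] => tX
  | b :: s' => match s' with
               | [::] => tX
               | _ => if has id s' then (if b then tP tX (nf s') else tR tX (nf s'))
                      else tL tX (lc (size s').-1)
               end
  end.

Lemma nf_cons b s : s != [::] -> nf (b :: s) =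
  if has id s then (if b then tP tX (nf s) else tR tX (nf s)) else tL tX (lc (size s).-1).
Proof. by case: s. Qed.

Lemma nf_has b s : has id s -> nf (b :: s) = if b then tP tX (nf s) else tR tX (nf s).
Proof. by case: s => // c s h; rewrite nf_cons // h. Qed.

Lemma nf_nseq k : nf (true :: nseq k false) = lc k.
Proof. by case: k => // k; rewrite nf_cons // has_nseq /= size_nseq. Qed.

Lemma nohas s : ~~ has id s -> s = nseq (size s) false.
Proof. by elim: s => // [[]] s IH //= h; rewrite -IH. Qed.

Lemma nfR k B : has id B -> teq (tR (rc k) (nf B)) (nf (nseq k.+1 false ++ B)).
Proof.
move=> hB; elim: k => [|k IH].
  by rewrite (_ : nseq 1 false ++ B = false :: B) // nf_has //; apply: teq_refl.
apply: teq_trans (ax5 _ _ _) _.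
rewrite (_ : nseq k.+2 false ++ B = false :: (nseq k.+1 false ++ B)) //.
rewrite [nf (false :: _)]nf_has ?has_cat ?hB ?orbT //.
exact: teq_R (teq_refl _) IH.
Qed.

Lemma nfL A j : has id A -> teq (tL (nf A) (lc j)) (nf (A ++ nseq j.+1 false)).
Proof.
elim: A => // b A IH hA.
case: A IH hA => [|c A] IH hA.
  by case: b hA => // _; rewrite cat1s nf_nseq; apply: teq_refl.
case hA': (has id (c :: A)).
  rewrite (nf_has b) // cat_cons (nf_has b) ?has_cat ?hA' //.
  case: b {hA}.
  - apply: teq_trans (ax7 _ _ _) _; exact: teq_P (teq_refl _) (IH hA').
  - apply: teq_trans (ax3 _ _ _) _; exact: teq_R (teq_refl _) (IH hA').
have eA := nohas (negbT hA').
case: b hA; last by move=> h; rewrite (h : has id (c :: A)) in hA'.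
move=> _; rewrite nf_cons // hA'.
have eA' : c :: A = nseq (size A).+1 false by [].
rewrite eA' size_nseq cat_cons -nseqD nf_nseq.
move: (size A) => n.
apply: teq_trans (ax1 _ _ _) _.
rewrite addSn /=; apply: teq_L; first exact: teq_refl.
rewrite addnS; exact: lc_cat.
Qed.

Lemma nfP A B : has id A -> has id B -> teq (tP (nf A) (nf B)) (nf (A ++ B)).
Proof.
move=> hA hB; elim: A hA => // b A IH hA.
case: A IH hA => [|c A] IH hA.
  case: b hA => // _; rewrite cat1s (nf_has true hB); exact: teq_refl.
case hA': (has id (c :: A)).
  rewrite (nf_has b) // cat_cons (nf_has b) ?has_cat ?hA' //.
  case: b {hA}.
  - apply: teq_trans (ax11 _ _ _) _; exact: teq_P (teq_refl _) (IH hA').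
  - apply: teq_trans (ax9 _ _ _) _; exact: teq_R (teq_refl _) (IH hA').
case: b hA; last by move=> h; rewrite (h : has id (c :: A)) in hA'.
move=> _; rewrite nf_cons // hA'.
have eA' : c :: A = nseq (size A).+1 false by exact: nohas (negbT hA').
rewrite eA' size_nseq cat_cons nf_has ?has_cat ?hB ?orbT //.
move: (size A) => n.
apply: teq_trans (ax8 _ _ _) _.
apply: teq_P; first exact: teq_refl.
apply: teq_trans (R_norm _ _) _.
rewrite leaves_lc /=; exact: nfR.
Qed.

Definition w (t : term) := E (phi t).

Lemma w_X : w tX = [:: true].
Proof.
rewrite /w /E /encr /=; congr [:: _].
by apply/existsP; exists ord0; rewrite in_set1 eqxx.
Qed.
Lemma w_L a b : w (tL a b) = w a ++ nseq (size (w b)) false.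
Proof. exact: E_L. Qed.
Lemma w_R a b : w (tR a b) = nseq (size (w a)) false ++ w b.
Proof. exact: E_R. Qed.
Lemma w_P a b : w (tP a b) = w a ++ w b.
Proof. exact: E_P. Qed.

Lemma deg_phi t : deg (phi t) = leaves t.
Proof. by elim: t => //= a IHa b IHb; rewrite -IHa -IHb. Qed.

Lemma size_w t : size (w t) = leaves t.
Proof. by rewrite /w /E size_encr -deg_phi. Qed.

Lemma has_w t : has id (w t).
Proof.
elim: t => [|a IHa b IHb|a IHa b IHb|a IHa b IHb];
  rewrite ?w_X ?w_L ?w_R ?w_P ?has_cat ?IHa ?IHb ?orbT //.
Qed.

Lemma nf_w t : teq t (nf (w t)).
Proof.
elim: t => [|a IHa b IHb|a IHa b IHb|a IHa b IHb].
- rewrite w_X; exact: teq_refl.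
- rewrite w_L size_w.
  apply: teq_trans (teq_L IHa (teq_refl b)) _.
  apply: teq_trans (L_norm _ _) _.
  rewrite -{2}(prednK (leaves_pos b)); exact: nfL (has_w a).
- rewrite w_R size_w.
  apply: teq_trans (teq_R (teq_refl a) IHb) _.
  apply: teq_trans (R_norm _ _) _.
  rewrite -{2}(prednK (leaves_pos a)); exact: nfR (has_w b).
- rewrite w_P.
  apply: teq_trans (teq_P IHa IHb) _.
  exact: nfP (has_w a) (has_w b).
Qed.

Lemma w_lc k : w (lc k) = true :: nseq k false.
Proof.
elim: k => [|k IH]; first exact: w_X.
by rewrite (_ : lc k.+1 = tL tX (lc k)) // w_L w_X IH /= size_nseq.
Qed.

Lemma w_nf s : has id s -> w (nf s) = s.
Proof.
elim: s => // b s IH hs.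
case: s IH hs => [|c s] IH hs.
  by case: b hs => // _; rewrite w_X.
case hs': (has id (c :: s)).
  rewrite (nf_has b) //; case: b {hs}; [by rewrite w_P w_X IH | by rewrite w_R w_X IH].
case: b hs; last by move=> h; rewrite (h : has id (c :: s)) in hs'.
move=> _; rewrite nf_cons // hs'.
have es : c :: s = nseq (size s).+1 false by exact: nohas (negbT hs').
by rewrite w_L w_X w_lc /= size_nseq es.
Qed.

Lemma has_E (x : P) : has id (E x).
Proof.
case: x => [[n X] hX]; rewrite /E /encr.
move: hX; rewrite /Pvalid /= => /set0Pn[j jX].
apply/(has_nthP false); exists (val j); first by rewrite size_mkseq ltn_ord.
by rewrite /= nth_mkseq ?ltn_ord //; apply/existsP; exists j; rewrite jX eqxx.
Qed.

Theorem proposition1p9 :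
  is_trioid pL pR pP /\
  (forall s t : term, teq s t -> phi s = phi t) /\
  (forall s t : term, phi s = phi t -> teq s t) /\
  (forall x : P, exists t : term, phi t = x) /\
  (forall t : term, deg (phi t) = leaves t).
Proof.
have T := trioid.
case: (T) => [a1 [a2 [a3 [a4 [a5 [a6 [a7 [a8 [a9 [a10 a11]]]]]]]]]].
split => //; split.
  move=> s t; elim => //=; by move=> *; congruence.
split.
  move=> s t e.
  apply: teq_trans (nf_w s) _.
  have -> : w s = w t by rewrite /w e.
  exact: teq_sym (nf_w t).
split; last exact: deg_phi.
move=> x; exists (nf (E x)); apply: E_inj.
exact: (w_nf (has_E x)).
Qed.
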